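(* Assume Assumption A and let $p\ge2$. There is a constant $C=C(b,\sigma,T,p)$ such that (i) $\mathbb{E}|X^n_{t_l}-T_{m,\pm}X^n_{t_l}|^p\le Ch^{p/2}$ for $1\le l,m\le n$; (ii) $\mathbb{E}\Big|\nabla X^{n,t_k,X^n_{t_k}}_{t_m}-\dfrac{\mathcal D^n_{k+1}X^n_{t_m}}{\sigma(t_{k+1},X^n_{t_k})}\Big|^p\le Ch^{p/2}$ for $0\le k<m\le n$; (iii) $\mathbb{E}|\mathcal D^n_kX^n_{t_m}|^p\le C$ for $1\le k\le m\le n$.
   Context: Fix $T>0$, $n$, $h=T/n$, $t_j=jh$. Assumption A: $b,\sigma:[0,T]\times\mathbb{R}\to\mathbb{R}$ and their first and second space derivatives are continuous and bounded, these derivatives locally $\gamma$-Hölder in the parabolic metric, $b,\sigma$ $\tfrac12$-Hölder in time uniformly in space, $\sigma\ge\delta>0$. $(\varepsilon_i)_{i=1}^n$ i.i.d. Rademacher. $X^n_{t_0}=x$, $X^n_{t_k}=x+h\sum_{j=1}^kb(t_j,X^n_{t_{j-1}})+\sqrt h\sum_{j=1}^k\sigma(t_j,X^n_{t_{j-1}})\varepsilon_j$. For $x'\in\mathbb{R}$, $X^{n,t_k,x'}_{t_m}$ ($m\ge k$) is the same recursion started at time $t_k$ from $x'$ with $\varepsilon_{k+1},\dots,\varepsilon_m$, and $\nabla X^{n,t_k,x'}_{t_m}=1+h\sum_{l=k+1}^mb_x(t_l,X^{n,t_k,x'}_{t_{l-1}})\nabla X^{n,t_k,x'}_{t_{l-1}}+\sqrt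 h\sum_{l=k+1}^m\sigma_x(t_l,X^{n,t_k,x'}_{t_{l-1}})\nabla X^{n,t_k,x'}_{t_{l-1}}\varepsilon_l$. For $\xi=F(\varepsilon_1,\dots,\varepsilon_n)$: $T_{m,\pm}\xi:=F(\varepsilon_1,\dots,\varepsilon_{m-1},\pm1,\varepsilon_{m+1},\dots,\varepsilon_n)$ and $\mathcal D^n_m\xi:=(T_{m,+}\xi-T_{m,-}\xi)/(2\sqrt h)$. *)

(* Defs.v *)
From Stdlib Require Import Reals Lra.
Open Scope R_scope.

(* x^a for x>0, and 0 for x<=0 (so that 0^a = 0, a>0). *)
Definition rpow (x a : R) : R := if Rlt_dec 0 x then Rpower x a else 0.

(* Sign sequences: eps j for j >= 1 are the Rademacher variables. *)
Definition upd (e : nat -> R) (k : nat) (v : R) : nat -> R :=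
  fun j => if Nat.eq_dec j k then v else e j.

(* Expectation over i.i.d. Rademacher eps_1..eps_k (uniform average over
   all 2^k sign choices); other indices are set to 0 (irrelevant). *)
Fixpoint Erad (k : nat) (F : (nat -> R) -> R) : R :=
  match k with
  | O => F (fun _ => 0)
  | S k' => Erad k' (fun e => (F (upd e (S k') 1) + F (upd e (S k') (-1))) / 2)
  end.

Definition step (T : R) (n : nat) : R := T / INR n.
Definition tj (T : R) (n j : nat) : R := INR j * step T n.

(* Xfrom T n b s k x e j  =  X^{n,t_k,x}_{t_(k+j)} *)
Fixpoint Xfrom (T : R) (n : nat) (b s : R -> R -> R) (k : nat) (x : R)
  (e : nat -> R) (j : nat) : R :=
  match j with
  | O => x
  | S j' => let y := Xfrom T n b s k x e j' in
            y + step T n * b (tj T n (k + S j')) y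
              + sqrt (step T n) * s (tj T n (k + S j')) y * e (k + S j')%nat
  end.

Definition Xn T n b s x e l := Xfrom T n b s 0 x e l.

(* NablaFrom T n b s bx sx k x e j = nabla X^{n,t_k,x}_{t_(k+j)} *)
Fixpoint NablaFrom (T : R) (n : nat) (b s bx sx : R -> R -> R) (k : nat) (x : R)
  (e : nat -> R) (j : nat) : R :=
  match j with
  | O => 1
  | S j' => let y := Xfrom T n b s k x e j' in
            let g := NablaFrom T n b s bx sx k x e j' in
            g + step T n * bx (tj T n (k + S j')) y * g
              + sqrt (step T n) * sx (tj T n (k + S j')) y * g * e (k + S j')%nat
  end.

Definition Tshift (m : nat) (v : R) (F : (nat -> R) -> R) : (nat -> R) -> R :=
  fun e => F (upd e m v).
Definition Dmal (T : R) (n m : nat) (F : (nat -> R) -> R) : (nat -> R) -> R :=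
  fun e => (F (upd e m 1) - F (upd e m (-1))) / (2 * sqrt (step T n)).

Definition bounded_on (T : R) (f : R -> R -> R) : Prop :=
  exists K, forall t x, 0 <= t <= T -> Rabs (f t x) <= K.

Definition cont_on (T : R) (f : R -> R -> R) : Prop :=
  forall t x, 0 <= t <= T -> forall eta, eta > 0 -> exists d, d > 0 /\
    forall t' x', 0 <= t' <= T -> Rabs (t' - t) < d -> Rabs (x' - x) < d ->
      Rabs (f t' x' - f t x) < eta.

Definition loc_holder_par (T gamma : R) (f : R -> R -> R) : Prop :=
  forall M, M > 0 -> exists L, forall t s x y, 0 <= t <= T -> 0 <= s <= T ->
    Rabs x <= M -> Rabs y <= M ->
    Rabs (f t x - f s y) <= L * rpow (sqrt (Rabs (t - s)) + Rabs (x - y)) gamma.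

Definition half_holder_time (T : R) (f : R -> R -> R) : Prop :=
  exists L, forall t s x, 0 <= t <= T -> 0 <= s <= T ->
    Rabs (f t x - f s x) <= L * sqrt (Rabs (t - s)).

Definition space_derivs (T : R) (f fx fxx : R -> R -> R) : Prop :=
  forall t x, 0 <= t <= T ->
    derivable_pt_lim (fun y => f t y) x (fx t x) /\
    derivable_pt_lim (fun y => fx t y) x (fxx t x).

Definition AssumptionA (T gamma delta : R) (b bx bxx s sx sxx : R -> R -> R) : Prop :=
  0 < gamma <= 1 /\ 0 < delta /\
  space_derivs T b bx bxx /\ space_derivs T s sx sxx /\
  cont_on T b /\ cont_on T bx /\ cont_on T bxx /\
  cont_on T s /\ cont_on T sx /\ cont_on T sxx /\
  bounded_on T b /\ bounded_on T bx /\ bounded_on T bxx /\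
  bounded_on T s /\ bounded_on T sx /\ bounded_on T sxx /\
  loc_holder_par T gamma bx /\ loc_holder_par T gamma bxx /\
  loc_holder_par T gamma sx /\ loc_holder_par T gamma sxx /\
  half_holder_time T b /\ half_holder_time T s /\
  (forall t x, 0 <= t <= T -> s t x >= delta).

(* Main.v *)
Require Import Defs.
From Stdlib Require Import Reals Lra Lia ZArith.
Open Scope R_scope.


Definition good (k : nat) (e : nat -> R) : Prop :=
  forall i, (1 <= i <= k)%nat -> e i = 1 \/ e i = -1.

Definition avg (j : nat) (F : (nat -> R) -> R) (e : nat -> R) : R :=
  (F (upd e j 1) + F (upd e j (-1))) / 2.

Lemma upd_eq e k v : upd e k v k = v.
Proof. unfold upd; destruct (Nat.eq_dec k k); congruence. Qed.
Lemma upd_neq e k v i : i <> k -> upd e k v i = e i.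
Proof. intros; unfold upd; destruct (Nat.eq_dec i k); congruence. Qed.

Lemma good_upd k e w : good k e -> (w = 1 \/ w = -1) -> good (S k) (upd e (S k) w).
Proof.
  intros H Hw i Hi. destruct (Nat.eq_dec i (S k)) as [->|Hne].
  - rewrite upd_eq; auto.
  - rewrite upd_neq by auto. apply H; lia.
Qed.

Lemma good_le k k' e : (k' <= k)%nat -> good k e -> good k' e.
Proof. intros Hk H i Hi. apply H; lia. Qed.

Lemma Erad_mono k : forall F G, (forall e, good k e -> F e <= G e) -> Erad k F <= Erad k G.
Proof.
  induction k; intros F G H; simpl.
  - apply H. intros i Hi; lia.
  - apply IHk. intros e He.
    assert (H1 := H _ (good_upd k e 1 He (or_introl eq_refl))).
    assert (H2 := H _ (good_upd k e (-1) He (or_intror eq_refl))). lra.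
Qed.

Lemma Erad_ext k F G : (forall e, good k e -> F e = G e) -> Erad k F = Erad k G.
Proof.
  intros H; apply Rle_antisym; apply Erad_mono; intros e He; rewrite H; auto; lra.
Qed.

Lemma Erad_lin k : forall (a : R) F G,
  Erad k (fun e => a * F e + G e) = a * Erad k F + Erad k G.
Proof.
  induction k; intros a F G; simpl; auto.
  rewrite <- IHk. apply Erad_ext; intros; lra.
Qed.

Lemma Erad_const k : forall c, Erad k (fun _ => c) = c.
Proof.
  induction k; intros c; simpl; auto.
  replace ((c + c) / 2) with c by lra. apply IHk.
Qed.

Lemma Erad_scal k a F : Erad k (fun e => a * F e) = a * Erad k F.
Proof.
  rewrite <- (Rplus_0_r (a * Erad k F)), <- (Erad_const k 0), <- Erad_lin.
  apply Erad_ext; intros; lra.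
Qed.

Lemma Erad_nonneg k F : (forall e, good k e -> 0 <= F e) -> 0 <= Erad k F.
Proof. intros H. rewrite <- (Erad_const k 0). apply Erad_mono; auto. Qed.

Lemma Erad_lift m n F : (m <= n)%nat ->
  (forall j e v, (m < j <= n)%nat -> F (upd e j v) = F e) -> Erad n F = Erad m F.
Proof.
  induction n; intros Hmn H.
  - replace m with 0%nat by lia; auto.
  - destruct (Nat.eq_dec m (S n)) as [->|Hne]; auto.
    simpl. rewrite <- IHn by (try lia; intros; apply H; lia).
    apply Erad_ext; intros e _. rewrite !H by lia. lra.
Qed.

Lemma Erad_step j (G H B : (nat -> R) -> R) (a : R) :
  (forall e, good j e -> avg (S j) G e <= a * H e + B e) ->
  Erad (S j) G <= a * Erad j H + Erad j B.
Proof.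
  intros Hs. simpl. rewrite <- Erad_lin. apply Erad_mono. exact Hs.
Qed.

Lemma Erad_gronwall (G : nat -> (nat -> R) -> R) (j0 M : nat) (a bc : R) :
  1 <= a -> 0 <= bc ->
  (forall j, (j0 <= j)%nat -> (j < M)%nat -> exists Bf : (nat -> R) -> R, Erad j Bf <= bc /\
     forall e, good j e -> avg (S j) (G (S j)) e <= a * G j e + Bf e) ->
  forall m, (j0 <= m <= M)%nat ->
  Erad m (G m) <= a ^ (m - j0) * (Erad j0 (G j0) + INR (m - j0) * bc).
Proof.
  intros Ha Hb Hs m Hm. induction m.
  - replace j0 with 0%nat by lia. simpl. lra.
  - destruct (Nat.eq_dec j0 (S m)) as [<-|Hne].
    + rewrite Nat.sub_diag. simpl. lra.
    + destruct (Hs m ltac:(lia) ltac:(lia)) as [Bf [HB HBs]].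
      assert (IH := IHm ltac:(lia)).
      eapply Rle_trans. apply Erad_step. exact HBs.
      replace (S m - j0)%nat with (S (m - j0)) by lia.
      rewrite S_INR, <- tech_pow_Rmult.
      assert (Hp : 1 <= a ^ (m - j0)) by (apply pow_R1_Rle; lra).
      assert (0 <= INR (m - j0)) by apply pos_INR.
      set (E := Erad m (G m)) in *. set (Q := a ^ (m - j0)) in *.
      apply Rle_trans with (a * (Q * (Erad j0 (G j0) + INR (m - j0) * bc)) + bc).
      * apply Rplus_le_compat; [apply Rmult_le_compat_l; lra | lra].
      * assert (1 <= a * Q) by nra. assert (bc <= a * Q * bc) by nra. nra.
Qed.


Fixpoint Mb (r : nat) : R := match r with O => 1 | S r' => 1 + 2 * Mb r' end.

Lemma Mb_ge1 r : 1 <= Mb r.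
Proof. induction r; simpl; lra. Qed.

Lemma pow2S r : (2 ^ S r = 2 * 2 ^ r)%nat.
Proof. simpl. lia. Qed.

Lemma bonami r : forall A B : R,
  (((A + B) ^ 2) ^ (2 ^ r) + ((A - B) ^ 2) ^ (2 ^ r)) / 2 <= (A ^ 2 + Mb r * B ^ 2) ^ (2 ^ r).
Proof.
  induction r; intros A B.
  - simpl. nra.
  - rewrite pow2S, !pow_mult.
    assert (E1 : ((A + B) ^ 2) ^ 2 = ((A^2 + B^2) + 2*A*B) ^ 2) by ring.
    assert (E2 : ((A - B) ^ 2) ^ 2 = ((A^2 + B^2) - 2*A*B) ^ 2) by ring.
    rewrite E1, E2. eapply Rle_trans. apply IHr.
    apply pow_incr. split.
    + assert (0 <= Mb r) by (pose proof (Mb_ge1 r); lra). nra.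
    + simpl Mb. assert (1 <= Mb r) by apply Mb_ge1.
      assert (0 <= A^2*B^2) by nra. assert (0 <= B^2*B^2) by nra. nra.
Qed.

Lemma convex_pow r : forall x y h, 0 <= x -> 0 <= y -> 0 < h ->
  (1 + h) * (x + y) ^ (2 ^ r) <= (1 + h) ^ (2 ^ r) * x ^ (2 ^ r) + h * (1 + / h) ^ (2 ^ r) * y ^ (2 ^ r).
Proof.
  induction r; intros x y h Hx Hy Hh.
  - simpl. replace (h * ((1 + / h) * 1)) with (h + 1) by (field; lra). rewrite !Rmult_1_r. nra.
  - rewrite pow2S, Nat.mul_comm, !pow_mult.
    set (S0 := (x + y) ^ 2 ^ r). set (a := (1 + h) ^ 2 ^ r). set (b := (1 + / h) ^ 2 ^ r).
    set (X := x ^ 2 ^ r). set (Y := y ^ 2 ^ r).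
    assert (IH := IHr x y h Hx Hy Hh). fold S0 a b X Y in IH.
    assert (HS : 0 <= S0) by (apply pow_le; lra).
    assert (HX : 0 <= X) by (apply pow_le; lra).
    assert (HY : 0 <= Y) by (apply pow_le; lra).
    assert (Ha : 0 <= a) by (apply pow_le; lra).
    assert (Hb : 0 <= b) by (apply pow_le; assert (0 < / h) by (apply Rinv_0_lt_compat; lra); lra).
    set (u := a * X). set (v := h * b * Y).
    assert (0 <= u) by (unfold u; apply Rmult_le_pos; auto). assert (0 <= v) by (unfold v; apply Rmult_le_pos; [apply Rmult_le_pos|]; auto; lra).
    assert (IH2 : (1 + h) * S0 <= u + v) by exact IH. assert (Hsq : ((1 + h) * S0) ^ 2 <= (u + v) ^ 2) by (apply pow_incr; split; [apply Rmult_le_pos; lra | lra]).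
    assert (CS : (u + v) ^ 2 <= (1 + h) * (u ^ 2 + v ^ 2 / h)).
    { assert (0 <= (h * u - v) ^ 2 / h) by (unfold Rdiv; apply Rmult_le_pos; [apply pow2_ge_0 | left; apply Rinv_0_lt_compat; lra]).
      assert (E : (1 + h) * (u ^ 2 + v ^ 2 / h) - (u + v) ^ 2 = (h * u - v) ^ 2 / h) by (field; lra).
      lra. }
    assert (E3 : (1 + h) * (u ^ 2 + v ^ 2 / h) = (1 + h) * (a ^ 2 * X ^ 2 + h * b ^ 2 * Y ^ 2)).
    { unfold u, v. field. lra. }
    assert (Hf : (1 + h) * ((1 + h) * S0 ^ 2) <= (1 + h) * (a ^ 2 * X ^ 2 + h * b ^ 2 * Y ^ 2)).
    { replace ((1 + h) * ((1 + h) * S0 ^ 2)) with (((1 + h) * S0) ^ 2) by ring. lra. }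
    apply Rmult_le_reg_l in Hf; [|lra].
    exact Hf.
Qed.

Lemma pow_exp_le a x k : 0 <= a -> a <= exp x -> a ^ k <= exp (x * INR k).
Proof.
  intros H0 H1. induction k.
  - simpl. rewrite Rmult_0_r, exp_0. lra.
  - rewrite S_INR, <- tech_pow_Rmult.
    replace (x * (INR k + 1)) with (x + x * INR k) by ring. rewrite exp_plus.
    apply Rmult_le_compat; auto. apply pow_le; auto.
Qed.

Lemma one_plus_exp u : 1 + u <= exp u.
Proof.
  destruct (Req_dec u 0) as [->|H].
  - rewrite exp_0; lra.
  - left; apply exp_ineq1; auto.
Qed.

Lemma exp_ge1 u : 0 <= u -> 1 <= exp u.
Proof. intros; pose proof (one_plus_exp u); lra. Qed.

Lemma rpow_le_pow (u p : R) (N : nat) : 0 <= u -> 0 < p -> p <= INR N -> rpow u p <= 1 + u ^ N.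
Proof.
  intros Hu Hp HN. unfold rpow. destruct (Rlt_dec 0 u) as [Hu'|Hu'].
  - destruct (Rle_lt_dec 1 u) as [H1|H1].
    + rewrite <- Rpower_pow by lra.
      assert (Rpower u p <= Rpower u (INR N)) by (apply Rle_Rpower; lra). lra.
    + unfold Rpower. assert (ln u < 0) by (rewrite <- ln_1; apply ln_increasing; lra).
      assert (exp (p * ln u) <= 1) by (rewrite <- exp_0; left; apply exp_increasing; nra).
      assert (0 <= u ^ N) by (apply pow_le; lra). lra.
  - assert (0 <= u ^ N) by (apply pow_le; lra). lra.
Qed.

Lemma rpow_nonneg u p : 0 <= rpow u p.
Proof. unfold rpow. destruct (Rlt_dec 0 u). unfold Rpower; left; apply exp_pos. lra. Qed.

Lemma rpow_reduce (z h p : R) (N : nat) : 0 < h -> 0 < p -> p <= 2 * INR N ->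
  rpow (Rabs z) p <= rpow h (p / 2) * (1 + ((z / sqrt h) ^ 2) ^ N).
Proof.
  intros Hh Hp HN.
  destruct (Req_dec z 0) as [->|Hz].
  - rewrite Rabs_R0. unfold rpow at 1. destruct (Rlt_dec 0 0); [lra|].
    apply Rmult_le_pos. apply rpow_nonneg. replace ((0 / sqrt h)^2) with 0 by (unfold Rdiv; ring).
    rewrite pow_i by (destruct N; simpl in HN; [lra|lia]). lra.
  - assert (Hs : 0 < sqrt h) by (apply sqrt_lt_R0; lra).
    set (u := (z / sqrt h) ^ 2).
    assert (Hu : 0 < u) by (unfold u; apply pow_lt_sq; auto; intro Hc; apply Hz;
       unfold Rdiv in Hc; apply Rmult_integral in Hc; destruct Hc as [Hc|Hc]; auto;
       apply Rinv_neq_0_compat in Hc; lra) || (unfold u; assert (z / sqrt h <> 0) by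
         (intro Hc; apply Hz; field_simplify_eq in Hc; lra || (unfold Rdiv in Hc; apply Rmult_integral in Hc; destruct Hc as [Hc|Hc]; auto; exfalso; apply Rinv_neq_0_compat in Hc; [auto|lra])); nra).
    assert (Habs : Rabs z = Rpower (h * u) (/ 2)).
    { rewrite Rpower_sqrt by nra. unfold u.
      replace (h * (z / sqrt h) ^ 2) with (z ^ 2).
      - rewrite <- sqrt_Rsqr_abs. unfold Rsqr. f_equal. ring.
      - field_simplify; [| lra]. rewrite pow2_sqrt by lra. field. lra. }
    unfold rpow at 1. destruct (Rlt_dec 0 (Rabs z)) as [_|Hc]; [| exfalso; apply Hc; apply Rabs_pos_lt; auto].
    rewrite Habs, Rpower_mult.
    rewrite <- Rpower_mult_distr by lra.
    replace (/ 2 * p) with (p / 2) by field.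
    unfold rpow. destruct (Rlt_dec 0 h) as [_|Hc]; [|lra].
    apply Rmult_le_compat_l. unfold Rpower; left; apply exp_pos.
    assert (H' := rpow_le_pow u (p / 2) N ltac:(lra) ltac:(lra) ltac:(lra)).
    unfold rpow in H'. destruct (Rlt_dec 0 u); [exact H'|lra].
Qed.



Lemma Xfrom_ext (T : R) (n : nat) (b s : R -> R -> R) k x e e' j : (forall i, (i <= k + j)%nat -> e i = e' i) ->
  Xfrom T n b s k x e j = Xfrom T n b s k x e' j.
Proof.
  induction j; intros H; simpl; auto.
  rewrite IHj by (intros; apply H; lia). rewrite H by lia. reflexivity.
Qed.

Lemma Nabla_ext (T : R) (n : nat) (b s bx sx : R -> R -> R) k x e e' j : (forall i, (i <= k + j)%nat -> e i = e' i) ->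
  NablaFrom T n b s bx sx k x e j = NablaFrom T n b s bx sx k x e' j.
Proof.
  induction j; intros H; simpl; auto.
  rewrite IHj by (intros; apply H; lia). rewrite (Xfrom_ext _ _ _ _ k x e e' j) by (intros; apply H; lia).
  rewrite H by lia. reflexivity.
Qed.

Lemma Xfrom_shift (T : R) (n : nat) (b s : R -> R -> R) x e k i :
  Xfrom T n b s 0 x e (k + i) = Xfrom T n b s k (Xfrom T n b s 0 x e k) e i.
Proof.
  induction i.
  - rewrite Nat.add_0_r; reflexivity.
  - rewrite <- plus_n_Sm. simpl. rewrite <- IHi. rewrite <- plus_n_Sm. reflexivity.
Qed.

Lemma Xn_step (T : R) (n : nat) (b s : R -> R -> R) x e e' j w : (forall i, (i <= j)%nat -> e' i = e i) -> e' (S j) = w ->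
  Xn T n b s x e' (S j) = Xn T n b s x e j + step T n * b (tj T n (S j)) (Xn T n b s x e j)
     + sqrt (step T n) * s (tj T n (S j)) (Xn T n b s x e j) * w.
Proof.
  intros H Hw. unfold Xn. simpl. rewrite Hw.
  rewrite (Xfrom_ext _ _ _ _ 0 x e' e j) by (intros; apply H; lia). reflexivity.
Qed.

Lemma Nab_step (T : R) (n : nat) (b s bx sx : R -> R -> R) x k e e' j w : (k <= j)%nat ->
  (forall i, (i <= j)%nat -> e' i = e i) -> e' (S j) = w ->
  NablaFrom T n b s bx sx k (Xn T n b s x e' k) e' (S j - k) =
  NablaFrom T n b s bx sx k (Xn T n b s x e k) e (j - k)
  + step T n * bx (tj T n (S j)) (Xn T n b s x e j) * NablaFrom T n b s bx sx k (Xn T n b s x e k) e (j - k)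
  + sqrt (step T n) * sx (tj T n (S j)) (Xn T n b s x e j) * NablaFrom T n b s bx sx k (Xn T n b s x e k) e (j - k) * w.
Proof.
  intros Hkj H Hw.
  assert (Hx : Xn T n b s x e' k = Xn T n b s x e k)
    by (unfold Xn; apply Xfrom_ext; intros; apply H; lia).
  rewrite Hx. replace (S j - k)%nat with (S (j - k)) by lia. simpl.
  replace (k + S (j - k))%nat with (S j) by lia. rewrite Hw.
  rewrite (Nabla_ext _ _ _ _ _ _ k _ e' e (j - k)) by (intros; apply H; lia).
  rewrite (Xfrom_ext _ _ _ _ k _ e' e (j - k)) by (intros; apply H; lia).
  assert (Hy : Xfrom T n b s k (Xn T n b s x e k) e (j - k) = Xn T n b s x e j).
  { unfold Xn. rewrite <- Xfrom_shift. f_equal. lia. }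
  rewrite Hy. reflexivity.
Qed.


Lemma lipschitz (f fx : R -> R) (K : R) :
  (forall y, derivable_pt_lim f y (fx y)) -> (forall y, Rabs (fx y) <= K) ->
  forall y z, Rabs (f y - f z) <= K * Rabs (y - z).
Proof.
  intros Hd Hb y z. destruct (MVT_abs f fx z y) as [c [Hc _]].
  - intros; apply Hd.
  - rewrite Hc. apply Rmult_le_compat_r. apply Rabs_pos. apply Hb.
Qed.

Lemma taylor1 (f fx fxx : R -> R) (K : R) :
  (forall y, derivable_pt_lim f y (fx y)) -> (forall y, derivable_pt_lim fx y (fxx y)) ->
  (forall y, Rabs (fxx y) <= K) ->
  forall y z, Rabs (f y - f z - fx z * (y - z)) <= K * (y - z) ^ 2.
Proof.
  intros Hd Hd2 Hb y z.
  destruct (MVT_abs (fun u => f u - fx z * u) (fun u => fx u - fx z) z y) as [c [Hc Hcr]].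
  - intros c _. replace (fx c - fx z) with (fx c - fx z * 1) by ring.
    apply derivable_pt_lim_minus; auto.
    apply derivable_pt_lim_scal with (f := id). apply derivable_pt_lim_id.
  - replace (f y - f z - fx z * (y - z)) with (f y - fx z * y - (f z - fx z * z)) by ring.
    rewrite Hc.
    assert (Hl := lipschitz fx fxx K Hd2 Hb c z).
    assert (Rabs (c - z) <= Rabs (y - z)).
    { unfold Rmin, Rmax in Hcr. destruct (Rle_dec z y);
      unfold Rabs; repeat destruct Rcase_abs; lra. }
    assert (0 <= K) by (pose proof (Hb y); pose proof (Rabs_pos (fxx y)); lra).
    replace ((y - z) ^ 2) with (Rabs (y - z) * Rabs (y - z)) by (rewrite <- Rabs_mult; rewrite Rabs_pos_eq by (apply Rle_0_sqr); unfold Rsqr; ring) || (rewrite <- Rabs_mult, Rabs_pos_eq; [ring | apply Rle_0_sqr]).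
    rewrite <- Rmult_assoc. apply Rmult_le_compat_r. apply Rabs_pos.
    eapply Rle_trans. apply Hl. apply Rmult_le_compat_l; auto.
Qed.


Lemma sq_le_of_abs u v : Rabs u <= v -> u ^ 2 <= v ^ 2.
Proof.
  intros H. rewrite <- (pow2_abs u). apply pow_incr. split; auto. apply Rabs_pos.
Qed.

Lemma sq_split u v h : 0 < h -> (u - v) ^ 2 <= (1 + h) * u ^ 2 + (1 + / h) * v ^ 2.
Proof.
  intros Hh.
  assert (E : (1 + h) * u ^ 2 + (1 + / h) * v ^ 2 - (u - v) ^ 2 = (h * u + v) ^ 2 / h) by (field; lra).
  assert (0 <= (h * u + v) ^ 2 / h).
  { unfold Rdiv; apply Rmult_le_pos; [apply pow2_ge_0 | left; apply Rinv_0_lt_compat; lra]. }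
  lra.
Qed.

Lemma sq_split2 u v : (u - v) ^ 2 <= 2 * u ^ 2 + 2 * v ^ 2.
Proof. assert (0 <= (u + v) ^ 2) by apply pow2_ge_0. nra. Qed.

Lemma rho_exp h K M : 0 <= h -> 0 <= K -> 0 <= M ->
  (1 + h * K) ^ 2 + M * h * K ^ 2 <= exp (h * (2 * K + M * K ^ 2)).
Proof.
  intros Hh HK HM.
  assert (H1 : 1 + h * K <= exp (h * K)) by apply one_plus_exp.
  assert (H2 : (1 + h * K) ^ 2 <= exp (h * K) ^ 2) by (apply pow_incr; nra).
  assert (H3 : 1 + M * h * K ^ 2 <= exp (M * h * K ^ 2)) by apply one_plus_exp.
  assert (E : exp (h * (2 * K + M * K ^ 2)) = exp (h * K) ^ 2 * exp (M * h * K ^ 2)).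
  { replace (exp (h * K) ^ 2) with (exp (h * K) * exp (h * K)) by ring.
    rewrite <- !exp_plus. f_equal. ring. }
  rewrite E.
  assert (1 <= exp (h * K) ^ 2) by (apply pow_R1_Rle; apply exp_ge1; nra).
  assert (0 <= M * h * K ^ 2) by (apply Rmult_le_pos; [nra | apply pow2_ge_0]).
  nra.
Qed.

Lemma hom_moment (Y : nat -> (nat -> R) -> R) (j0 M' : nat) (K h c0 : R) (r : nat) :
  0 < h -> 0 <= K -> 0 <= c0 ->
  (forall e, good j0 e -> Rabs (Y j0 e) <= c0) ->
  (forall j, (j0 <= j)%nat -> (j < M')%nat -> forall e, good j e -> exists al be,
     Rabs al <= K * Rabs (Y j e) /\ Rabs be <= K * Rabs (Y j e) /\
     forall w, (w = 1 \/ w = -1) -> Y (S j) (upd e (S j) w) = Y j e + h * al + sqrt h * be * w) ->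
  forall m, (j0 <= m <= M')%nat ->
  Erad m (fun e => (Y m e ^ 2) ^ (2 ^ r)) <=
    exp (h * (2 * K + Mb r * K ^ 2) * INR (2 ^ r) * INR (m - j0)) * (c0 ^ 2) ^ (2 ^ r).
Proof.
  intros Hh HK Hc0 H0 Hs m Hm.
  set (N := (2 ^ r)%nat).
  set (rho := (1 + h * K) ^ 2 + Mb r * h * K ^ 2).
  assert (HM := Mb_ge1 r).
  assert (Hrho1 : 1 <= rho).
  { unfold rho. assert (1 <= (1 + h * K) ^ 2) by (apply pow_R1_Rle; nra).
    assert (0 <= Mb r * h * K ^ 2) by (apply Rmult_le_pos; [nra|apply pow2_ge_0]). lra. }
  assert (Ha : 1 <= rho ^ N) by (apply pow_R1_Rle; lra).
  assert (G := Erad_gronwall (fun j e => (Y j e ^ 2) ^ N) j0 M' (rho ^ N) 0 Ha (Rle_refl 0)).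
  eapply Rle_trans. apply G; auto.
  - intros j Hj HjM. exists (fun _ => 0). split. rewrite Erad_const; lra.
    intros e He. destruct (Hs j Hj HjM e He) as [al [be [Hal [Hbe Hrec]]]].
    unfold avg. rewrite !Hrec by auto.
    set (y := Y j e). change (Y j e) with y in Hal, Hbe.
    replace (y + h * al + sqrt h * be * 1) with ((y + h * al) + sqrt h * be) by ring.
    replace (y + h * al + sqrt h * be * -1) with ((y + h * al) - sqrt h * be) by ring.
    eapply Rle_trans. apply bonami. fold N.
    rewrite Rplus_0_r, <- Rpow_mult_distr.
    apply pow_incr. split.
    + assert (0 <= Mb r * (sqrt h * be) ^ 2) by (apply Rmult_le_pos; [lra|apply pow2_ge_0]).
      assert (0 <= (y + h * al) ^ 2) by apply pow2_ge_0. lra.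
    + assert (A1 : (y + h * al) ^ 2 <= ((1 + h * K) * Rabs y) ^ 2).
      { apply sq_le_of_abs. eapply Rle_trans. apply Rabs_triang.
        rewrite Rabs_mult, (Rabs_pos_eq h) by lra.
        assert (h * Rabs al <= h * (K * Rabs y)) by (apply Rmult_le_compat_l; lra). nra. }
      assert (A2 : (sqrt h * be) ^ 2 <= h * K ^ 2 * y ^ 2).
      { rewrite Rpow_mult_distr, pow2_sqrt by lra.
        assert (be ^ 2 <= (K * Rabs y) ^ 2) by (apply sq_le_of_abs; auto).
        rewrite Rpow_mult_distr, pow2_abs in H. nra. }
      rewrite Rpow_mult_distr, pow2_abs in A1. unfold rho. nra.
  - rewrite Rmult_0_r, Rplus_0_r.
    apply Rmult_le_compat.
    + apply pow_le; lra.
    + apply Erad_nonneg. intros; apply pow_le; apply pow2_ge_0.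
    + rewrite <- pow_mult.
      replace (h * (2 * K + Mb r * K ^ 2) * INR N * INR (m - j0)) with
        ((h * (2 * K + Mb r * K ^ 2)) * INR (N * (m - j0))) by (rewrite mult_INR; ring).
      apply pow_exp_le. lra. apply rho_exp; lra.
    + rewrite <- (Erad_const j0 ((c0 ^ 2) ^ N)).
      apply Erad_mono. intros e He. apply pow_incr. split. apply pow2_ge_0.
      apply sq_le_of_abs. auto.
Qed.

Lemma alpha_exp h K M : 0 <= h -> 0 <= K -> 0 <= M ->
  (1 + h) * ((1 + h) * (1 + h * K) ^ 2 + 2 * M * h * K ^ 2) <= exp (h * (2 + 2 * K + 2 * M * K ^ 2)).
Proof.
  intros Hh HK HM.
  assert (E1 : 1 + h <= exp h) by apply one_plus_exp.
  assert (H1 : (1 + h) * (1 + h * K) ^ 2 <= exp (h * (1 + 2 * K))).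
  { assert (H := rho_exp h K 0 Hh HK (Rle_refl 0)).
    replace (h * (1 + 2 * K)) with (h + h * (2 * K + 0 * K ^ 2)) by ring.
    rewrite exp_plus. apply Rmult_le_compat.
    - lra.
    - apply pow2_ge_0.
    - exact E1.
    - replace ((1 + h * K) ^ 2) with ((1 + h * K) ^ 2 + 0 * h * K ^ 2) by ring. auto. }
  assert (H3 : 1 + 2 * M * h * K ^ 2 <= exp (2 * M * h * K ^ 2)) by apply one_plus_exp.
  assert (0 <= 2 * M * h * K ^ 2) by (apply Rmult_le_pos; [nra | apply pow2_ge_0]).
  assert (Ex : 1 <= exp (h * (1 + 2 * K))) by (apply exp_ge1; nra).
  assert (H4 : (1 + h) * (1 + h * K) ^ 2 + 2 * M * h * K ^ 2 <= exp (h * (1 + 2 * K)) * exp (2 * M * h * K ^ 2)) by nra.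
  replace (h * (2 + 2 * K + 2 * M * K ^ 2)) with (h + (h * (1 + 2 * K) + 2 * M * h * K ^ 2)) by ring.
  rewrite !exp_plus. apply Rmult_le_compat; try lra.
  assert (0 <= (1 + h) * (1 + h * K) ^ 2) by (apply Rmult_le_pos; [lra|apply pow2_ge_0]). lra.
Qed.

Lemma inh_moment (W U : nat -> (nat -> R) -> R) (j0 M' : nat) (K L h c0 Bu : R) (r : nat) :
  0 < h -> 0 <= K -> 0 <= L -> 0 <= c0 -> 0 <= Bu ->
  (forall e, good j0 e -> Rabs (W j0 e) <= c0) ->
  (forall j, (j0 <= j)%nat -> (j < M')%nat -> Erad j (fun e => (U j e ^ 2) ^ (2 ^ S r)) <= Bu) ->
  (forall j, (j0 <= j)%nat -> (j < M')%nat -> forall e, good j e -> exists a c r1 r2,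
     Rabs a <= K /\ Rabs c <= K /\ Rabs r1 <= L * h * U j e ^ 2 /\ Rabs r2 <= L * sqrt h * U j e ^ 2 /\
     forall w, (w = 1 \/ w = -1) ->
       W (S j) (upd e (S j) w) = W j e * (1 + h * a + sqrt h * c * w) - r1 - r2 * w) ->
  forall m, (j0 <= m <= M')%nat ->
  Erad m (fun e => (W m e ^ 2) ^ (2 ^ r)) <=
    exp (h * (2 + 2 * K + 2 * Mb r * K ^ 2) * INR (2 ^ r) * INR (m - j0)) *
    ((c0 ^ 2) ^ (2 ^ r) + INR (m - j0) * (h * ((1 + h) * ((1 + h) * L ^ 2 + 2 * Mb r * L ^ 2)) ^ (2 ^ r) * Bu)).
Proof.
  intros Hh HK HL Hc0 HBu H0 HU Hs m Hm.
  set (N := (2 ^ r)%nat).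
  set (M := Mb r). assert (HM : 1 <= M) by apply Mb_ge1.
  set (x0 := (1 + h) * (1 + h * K) ^ 2 + 2 * M * h * K ^ 2).
  set (lam := (1 + h) * L ^ 2 + 2 * M * L ^ 2).
  assert (Hlam : 0 <= lam) by (unfold lam; assert (0 <= L^2) by apply pow2_ge_0; nra).
  assert (Hx01 : 1 <= x0).
  { unfold x0. assert (1 <= (1 + h * K) ^ 2) by (apply pow_R1_Rle; nra).
    assert (0 <= 2 * M * h * K ^ 2) by (apply Rmult_le_pos; [nra|apply pow2_ge_0]). nra. }
  assert (Ha : 1 <= ((1 + h) * x0) ^ N) by (apply pow_R1_Rle; nra).
  set (cst := h * ((1 + h) * lam) ^ N).
  assert (Hcst : 0 <= cst) by (unfold cst; apply Rmult_le_pos; [lra | apply pow_le; nra]).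
  assert (G := Erad_gronwall (fun j e => (W j e ^ 2) ^ N) j0 M' (((1 + h) * x0) ^ N) (cst * Bu) Ha
                 ltac:(apply Rmult_le_pos; lra)).
  eapply Rle_trans. apply G; auto.
  - intros j Hj HjM. exists (fun e => cst * (U j e ^ 2) ^ (2 ^ S r)). split.
    { rewrite Erad_scal. apply Rmult_le_compat_l; auto. }
    intros e He. destruct (Hs j Hj HjM e He) as [a [c [r1 [r2 [Ha' [Hc [Hr1 [Hr2 Hrec]]]]]]]].
    unfold avg. rewrite !Hrec by auto.
    set (y := W j e). set (u := U j e). change (W j e) with y. change (U j e) with u in Hr1, Hr2.
    set (A := y * (1 + h * a) - r1). set (B := sqrt h * c * y - r2).
    replace (y * (1 + h * a + sqrt h * c * 1) - r1 - r2 * 1) with (A + B) by (unfold A, B; ring).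
    replace (y * (1 + h * a + sqrt h * c * -1) - r1 - r2 * -1) with (A - B) by (unfold A, B; ring).
    eapply Rle_trans. apply bonami. fold N M.
    assert (HA : A ^ 2 <= (1 + h) * (1 + h * K) ^ 2 * y ^ 2 + (1 + h) * h * L ^ 2 * (u ^ 2) ^ 2).
    { unfold A. eapply Rle_trans. apply sq_split. exact Hh.
      assert (B1 : (y * (1 + h * a)) ^ 2 <= ((1 + h * K) * Rabs y) ^ 2).
      { apply sq_le_of_abs. rewrite Rabs_mult, Rmult_comm. apply Rmult_le_compat_r. apply Rabs_pos.
        eapply Rle_trans. apply Rabs_triang. rewrite Rabs_R1, Rabs_mult, (Rabs_pos_eq h) by lra.
        assert (h * Rabs a <= h * K) by (apply Rmult_le_compat_l; lra). lra. }
      rewrite (Rpow_mult_distr (1 + h * K)), pow2_abs, Rpow_mult_distr in B1.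
      assert (B2 : r1 ^ 2 <= (L * h * u ^ 2) ^ 2) by (apply sq_le_of_abs; auto).
      assert (E : (1 + / h) * (L * h * u ^ 2) ^ 2 = (1 + h) * h * L ^ 2 * (u ^ 2) ^ 2) by (field; lra).
      assert (0 < / h) by (apply Rinv_0_lt_compat; lra).
      apply Rplus_le_compat.
      - rewrite Rmult_assoc. apply Rmult_le_compat_l; lra.
      - rewrite <- E. apply Rmult_le_compat_l; lra. }
    assert (HB : B ^ 2 <= 2 * h * K ^ 2 * y ^ 2 + 2 * L ^ 2 * h * (u ^ 2) ^ 2).
    { unfold B. eapply Rle_trans. apply sq_split2.
      assert (B1 : (sqrt h * c * y) ^ 2 <= h * K ^ 2 * y ^ 2).
      { rewrite !Rpow_mult_distr, pow2_sqrt by lra.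
        assert (c ^ 2 <= K ^ 2) by (apply sq_le_of_abs; auto).
        assert (0 <= y ^ 2) by apply pow2_ge_0.
        assert (c ^ 2 * y ^ 2 <= K ^ 2 * y ^ 2) by (apply Rmult_le_compat_r; auto).
        assert (h * (c ^ 2 * y ^ 2) <= h * (K ^ 2 * y ^ 2)) by (apply Rmult_le_compat_l; lra).
        nra. }
      assert (B2 : r2 ^ 2 <= (L * sqrt h * u ^ 2) ^ 2) by (apply sq_le_of_abs; auto).
      rewrite !Rpow_mult_distr, pow2_sqrt in B2 by lra. nra. }
    set (x := x0 * y ^ 2). set (z := h * lam * (u ^ 2) ^ 2).
    assert (Hx : 0 <= x) by (unfold x; apply Rmult_le_pos; [lra | apply pow2_ge_0]).
    assert (Hz : 0 <= z) by (unfold z; apply Rmult_le_pos; [nra | apply pow2_ge_0]).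
    assert (Hsum : A ^ 2 + M * B ^ 2 <= x + z).
    { unfold x, z, x0, lam. nra. }
    assert (HP : (A ^ 2 + M * B ^ 2) ^ N <= (x + z) ^ N).
    { apply pow_incr. split; auto.
      assert (0 <= A ^ 2) by apply pow2_ge_0. assert (0 <= B ^ 2) by apply pow2_ge_0. nra. }
    eapply Rle_trans. exact HP.
    assert (HC := convex_pow r x z h Hx Hz Hh). fold N in HC.
    assert (0 <= (x + z) ^ N) by (apply pow_le; lra).
    assert (HC2 : (x + z) ^ N <= (1 + h) ^ N * x ^ N + h * (1 + / h) ^ N * z ^ N) by nra.
    eapply Rle_trans. exact HC2.
    apply Rplus_le_compat; apply Req_le.
    + unfold x. rewrite !Rpow_mult_distr. ring.
    + unfold z, cst. rewrite pow2S, pow_mult. fold N.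
      assert (Eh : (1 + / h) ^ N * h ^ N = (1 + h) ^ N).
      { rewrite <- Rpow_mult_distr. f_equal. field. lra. }
      rewrite !Rpow_mult_distr, <- Eh. ring.
  - apply Rmult_le_compat.
    + apply pow_le; lra.
    + assert (0 <= Erad j0 (fun e => (W j0 e ^ 2) ^ N)) by (apply Erad_nonneg; intros; apply pow_le; apply pow2_ge_0).
      assert (0 <= INR (m - j0)) by apply pos_INR. assert (0 <= cst * Bu) by (apply Rmult_le_pos; lra). assert (0 <= INR (m - j0) * (cst * Bu)) by (apply Rmult_le_pos; lra). lra.
    + rewrite <- pow_mult.
      replace (h * (2 + 2 * K + 2 * M * K ^ 2) * INR N * INR (m - j0)) with
        ((h * (2 + 2 * K + 2 * M * K ^ 2)) * INR (N * (m - j0))) by (rewrite mult_INR; ring).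
      apply pow_exp_le. nra. apply alpha_exp; lra.
    + apply Rplus_le_compat.
      * rewrite <- (Erad_const j0 ((c0 ^ 2) ^ N)).
        apply Erad_mono. intros e He. apply pow_incr. split. apply pow2_ge_0.
        apply sq_le_of_abs. auto.
      * unfold cst, lam. right. ring.
Qed.


Lemma upd_comm_le e k v j w i : (i <= j)%nat -> upd (upd e (S j) w) k v i = upd e k v i.
Proof.
  intros H. unfold upd. destruct (Nat.eq_dec i k); auto.
  destruct (Nat.eq_dec i (S j)); [lia | auto].
Qed.

Lemma upd_comm_S e k v j w : (k <= j)%nat -> upd (upd e (S j) w) k v (S j) = w.
Proof.
  intros H. unfold upd. destruct (Nat.eq_dec (S j) k); [lia|].
  destruct (Nat.eq_dec (S j) (S j)); congruence.
Qed.

Lemma upd_le e j w i : (i <= j)%nat -> upd e (S j) w i = e i.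
Proof. intros; apply upd_neq; lia. Qed.

Lemma diff_rec (X1 X2 b1 b2 s1 s2 h c K : R) : 0 < c ->
  Rabs (b1 - b2) <= K * Rabs (X1 - X2) -> Rabs (s1 - s2) <= K * Rabs (X1 - X2) ->
  exists al be, Rabs al <= K * Rabs ((X1 - X2) * c) /\ Rabs be <= K * Rabs ((X1 - X2) * c) /\
   forall w, ((X1 + h * b1 + sqrt h * s1 * w) - (X2 + h * b2 + sqrt h * s2 * w)) * c
     = (X1 - X2) * c + h * al + sqrt h * be * w.
Proof.
  intros Hc Hb Hs. exists ((b1 - b2) * c), ((s1 - s2) * c).
  rewrite !Rabs_mult, (Rabs_pos_eq c) by lra. repeat split.
  - rewrite <- Rmult_assoc. apply Rmult_le_compat_r; lra.
  - rewrite <- Rmult_assoc. apply Rmult_le_compat_r; lra.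
  - intros; ring.
Qed.

Lemma W_alg (Nab Xp Xm bp bm sp sm bxX sxX h q w sig : R) : 0 < q -> h = q * q -> 0 < sig ->
  ((Nab + h * bxX * Nab + q * sxX * Nab * w)
    - ((Xp + h * bp + q * sp * w) - (Xm + h * bm + q * sm * w)) / (2 * q) / sig) / q
  = ((Nab - (Xp - Xm) / (2 * q) / sig) / q) * (1 + h * bxX + q * sxX * w)
    - (bp - bm - bxX * (Xp - Xm)) / (2 * sig) - (sp - sm - sxX * (Xp - Xm)) / (2 * q * sig) * w.
Proof. intros Hq Hh Hs. subst h. field. lra. Qed.


Lemma upd_far e j v k w i : (i < j)%nat -> upd (upd e j v) k w i = upd e k w i.
Proof. intros H. unfold upd. destruct (Nat.eq_dec i k); auto. destruct (Nat.eq_dec i j); [lia|auto]. Qed.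

Lemma Erad_plus_const k c F : Erad k (fun e => c + F e) = c + Erad k F.
Proof.
  rewrite <- (Rmult_1_l (Erad k F)). rewrite <- (Erad_const k c) at 1.
  rewrite Rplus_comm, <- Erad_lin. apply Erad_ext; intros; simpl; lra.
Qed.

Lemma step_pos T n : 0 < T -> (1 <= n)%nat -> 0 < step T n.
Proof. intros; unfold step. apply Rdiv_lt_0_compat; auto. apply lt_0_INR; lia. Qed.

Lemma step_le T n : 0 < T -> (1 <= n)%nat -> step T n <= T.
Proof.
  intros. unfold step. assert (1 <= INR n) by (apply (le_INR 1); lia).
  apply Rmult_le_reg_r with (INR n); [lra|]. unfold Rdiv. rewrite Rmult_assoc, Rinv_l by lra. nra.
Qed.

Lemma step_sum T n j : 0 < T -> (1 <= n)%nat -> (j <= n)%nat -> step T n * INR j <= T.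
Proof.
  intros. unfold step. assert (1 <= INR n) by (apply (le_INR 1); lia).
  assert (INR j <= INR n) by (apply le_INR; lia).
  unfold Rdiv. replace T with (T * / INR n * INR n) at 2 by (field; lra).
  apply Rmult_le_compat_l; auto. apply Rmult_le_pos; [lra|]. left; apply Rinv_0_lt_compat; lra.
Qed.

Lemma tj_range T n j : 0 < T -> (1 <= n)%nat -> (j <= n)%nat -> 0 <= tj T n j <= T.
Proof.
  intros. unfold tj. split.
  - apply Rmult_le_pos. apply pos_INR. left; apply step_pos; auto.
  - rewrite Rmult_comm. apply step_sum; auto.
Qed.

Lemma exp_mono x y : x <= y -> exp x <= exp y.
Proof. intros [H|H]; [left; apply exp_increasing; auto | subst; lra]. Qed.

Lemma pow_abs_2N y N : Rabs y ^ (2 * N) = (y ^ 2) ^ N.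
Proof. rewrite pow_mult, pow2_abs. reflexivity. Qed.

Definition Hyps (T K : R) (b bx s sx : R -> R -> R) : Prop :=
  0 < K /\
  (forall t, 0 <= t <= T -> forall y z, Rabs (b t y - b t z) <= K * Rabs (y - z)) /\
  (forall t, 0 <= t <= T -> forall y z, Rabs (s t y - s t z) <= K * Rabs (y - z)) /\
  (forall t, 0 <= t <= T -> forall y z, Rabs (b t y - b t z - bx t z * (y - z)) <= K * (y - z) ^ 2) /\
  (forall t, 0 <= t <= T -> forall y z, Rabs (s t y - s t z - sx t z * (y - z)) <= K * (y - z) ^ 2) /\
  (forall t y, 0 <= t <= T -> Rabs (bx t y) <= K) /\
  (forall t y, 0 <= t <= T -> Rabs (sx t y) <= K) /\
  (forall t y, 0 <= t <= T -> Rabs (s t y) <= K) /\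
  (forall t y, 0 <= t <= T -> 0 < s t y).

Lemma part_iii T K b bx s sx p r x n k m :
  0 < T -> Hyps T K b bx s sx -> 0 < p -> p <= 2 * INR (2 ^ r) ->
  (1 <= n)%nat -> (1 <= k <= m)%nat -> (m <= n)%nat ->
  Erad n (fun e => rpow (Rabs (Dmal T n k (fun e' => Xn T n b s x e' m) e)) p)
   <= 1 + exp ((2 * K + Mb r * K ^ 2) * INR (2 ^ r) * T) * (K ^ 2) ^ (2 ^ r).
Proof.
  intros HT [HK [Hlb [Hls [Htb [Hts [Hbx [Hsx [Hsb Hsp]]]]]]]] Hp HpN Hn Hkm Hmn.
  set (h := step T n). assert (Hh : 0 < h) by (apply step_pos; auto).
  assert (Hsq : 0 < sqrt h) by (apply sqrt_lt_R0; auto).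
  set (c := / (2 * sqrt h)). assert (Hc : 0 < c) by (apply Rinv_0_lt_compat; lra).
  set (Y := fun j e => (Xn T n b s x (upd e k 1) j - Xn T n b s x (upd e k (-1)) j) * c).
  set (N := (2 ^ r)%nat).
  assert (HY := hom_moment Y k m K h K r Hh ltac:(lra) ltac:(lra)).
  assert (HYm : Erad m (fun e => (Y m e ^ 2) ^ N) <=
      exp (h * (2 * K + Mb r * K ^ 2) * INR N * INR (m - k)) * (K ^ 2) ^ N).
  { apply HY; [| | lia].
    - intros e He. destruct k as [|k']; [lia|]. unfold Y.
      rewrite (Xn_step T n b s x e (upd e (S k') 1) k' 1) by (try apply upd_eq; intros; apply upd_le; auto).
      rewrite (Xn_step T n b s x e (upd e (S k') (-1)) k' (-1)) by (try apply upd_eq; intros; apply upd_le; auto).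
      fold h. set (sv := s (tj T n (S k')) (Xn T n b s x e k')).
      replace ((Xn T n b s x e k' + h * b (tj T n (S k')) (Xn T n b s x e k') + sqrt h * sv * 1 -
        (Xn T n b s x e k' + h * b (tj T n (S k')) (Xn T n b s x e k') + sqrt h * sv * -1)) * c) with sv
        by (unfold c; field; lra).
      apply Hsb. apply tj_range; auto; lia.
    - intros j Hj HjM e He.
      assert (Ht := tj_range T n (S j) HT Hn ltac:(lia)).
      destruct (diff_rec (Xn T n b s x (upd e k 1) j) (Xn T n b s x (upd e k (-1)) j)
         (b (tj T n (S j)) (Xn T n b s x (upd e k 1) j)) (b (tj T n (S j)) (Xn T n b s x (upd e k (-1)) j))
         (s (tj T n (S j)) (Xn T n b s x (upd e k 1) j)) (s (tj T n (S j)) (Xn T n b s x (upd e k (-1)) j))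
         h c K Hc (Hlb _ Ht _ _) (Hls _ Ht _ _)) as [al [be [Hal [Hbe Heq]]]].
      exists al, be. split; [exact Hal|]. split; [exact Hbe|].
      intros w Hw. unfold Y.
      rewrite (Xn_step T n b s x (upd e k 1) (upd (upd e (S j) w) k 1) j w)
        by (try apply upd_comm_S; try lia; intros; apply upd_comm_le; auto).
      rewrite (Xn_step T n b s x (upd e k (-1)) (upd (upd e (S j) w) k (-1)) j w)
        by (try apply upd_comm_S; try lia; intros; apply upd_comm_le; auto).
      fold h. apply Heq. }
  assert (Hlift : Erad n (fun e => (Y m e ^ 2) ^ N) = Erad m (fun e => (Y m e ^ 2) ^ N)).
  { apply Erad_lift; auto. intros j e v Hj. unfold Y. unfold Xn.
    rewrite (Xfrom_ext _ _ _ _ 0 x (upd (upd e j v) k 1) (upd e k 1) m) by (intros; apply upd_far; lia).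
    rewrite (Xfrom_ext _ _ _ _ 0 x (upd (upd e j v) k (-1)) (upd e k (-1)) m) by (intros; apply upd_far; lia).
    reflexivity. }
  apply Rle_trans with (Erad n (fun e => 1 + (Y m e ^ 2) ^ N)).
  - apply Erad_mono. intros e _. unfold Dmal.
    replace ((Xn T n b s x (upd e k 1) m - Xn T n b s x (upd e k (-1)) m) / (2 * sqrt (step T n))) with (Y m e) by reflexivity.
    rewrite <- pow_abs_2N. apply rpow_le_pow. apply Rabs_pos. auto. rewrite mult_INR. replace (INR 2) with 2 by (simpl; lra). exact HpN.
  - rewrite Erad_plus_const, Hlift. apply Rplus_le_compat_l.
    eapply Rle_trans. exact HYm. apply Rmult_le_compat_r. apply pow_le, pow2_ge_0.
    apply exp_mono.
    assert (Hs := step_sum T n (m - k) HT Hn ltac:(lia)). fold h in Hs.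
    assert (0 <= (2 * K + Mb r * K ^ 2) * INR N).
    { apply Rmult_le_pos; [|apply pos_INR]. pose proof (Mb_ge1 r). assert (0 <= K^2) by apply pow2_ge_0. nra. }
    replace (h * (2 * K + Mb r * K ^ 2) * INR N * INR (m - k)) with
      ((2 * K + Mb r * K ^ 2) * INR N * (h * INR (m - k))) by ring.
    apply Rmult_le_compat_l; auto.
Qed.


Lemma gamma_nonneg K r N : 0 < K -> 0 <= (2 * K + Mb r * K ^ 2) * INR N.
Proof.
  intros HK. apply Rmult_le_pos; [|apply pos_INR]. pose proof (Mb_ge1 r).
  assert (0 <= K^2) by apply pow2_ge_0. nra.
Qed.

Lemma exp_bound_T T n g j : 0 < T -> (1 <= n)%nat -> (j <= n)%nat -> 0 <= g ->
  exp (step T n * g * INR j) <= exp (g * T).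
Proof.
  intros. apply exp_mono. assert (Hs := step_sum T n j H H0 H1).
  replace (step T n * g * INR j) with (g * (step T n * INR j)) by ring.
  apply Rmult_le_compat_l; auto.
Qed.

Lemma part_i T K b bx s sx p r x n l m v :
  0 < T -> Hyps T K b bx s sx -> 0 < p -> p <= 2 * INR (2 ^ r) ->
  (1 <= n)%nat -> (1 <= l <= n)%nat -> (1 <= m <= n)%nat -> (v = 1 \/ v = -1) ->
  Erad n (fun e => rpow (Rabs (Xn T n b s x e l - Tshift m v (fun e' => Xn T n b s x e' l) e)) p)
   <= (1 + exp ((2 * K + Mb r * K ^ 2) * INR (2 ^ r) * T) * ((2 * K) ^ 2) ^ (2 ^ r)) * rpow (step T n) (p / 2).
Proof.
  intros HT HH Hp HpN Hn Hl Hm Hv.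
  destruct HH as [HK [Hlb [Hls [Htb [Hts [Hbx [Hsx [Hsb Hsp]]]]]]]].
  set (h := step T n). assert (Hh : 0 < h) by (apply step_pos; auto).
  assert (Hsq : 0 < sqrt h) by (apply sqrt_lt_R0; auto).
  set (N := (2 ^ r)%nat).
  assert (HC0 : 0 <= 1 + exp ((2 * K + Mb r * K ^ 2) * INR N * T) * ((2 * K) ^ 2) ^ N).
  { assert (0 <= ((2 * K) ^ 2) ^ N) by (apply pow_le, pow2_ge_0).
    assert (0 < exp ((2 * K + Mb r * K ^ 2) * INR N * T)) by apply exp_pos. nra. }
  destruct (Nat.lt_ge_cases l m) as [Hlm|Hml].
  - apply Rle_trans with 0.
    + right. rewrite <- (Erad_const n 0). apply Erad_ext. intros e _. unfold Tshift, Xn.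
      rewrite (Xfrom_ext _ _ _ _ 0 x (upd e m v) e l) by (intros; apply upd_neq; lia).
      rewrite Rminus_diag, Rabs_R0. unfold rpow. destruct (Rlt_dec 0 0); [lra|auto].
    + apply Rmult_le_pos; auto. apply rpow_nonneg.
  - set (c := / sqrt h). assert (Hc : 0 < c) by (apply Rinv_0_lt_compat; lra).
    set (Y := fun j e => (Xn T n b s x e j - Xn T n b s x (upd e m v) j) * c).
    assert (HY := hom_moment Y m l K h (2 * K) r Hh ltac:(lra) ltac:(lra)).
    assert (HYl : Erad l (fun e => (Y l e ^ 2) ^ N) <=
        exp (h * (2 * K + Mb r * K ^ 2) * INR N * INR (l - m)) * ((2 * K) ^ 2) ^ N).
    { apply HY; [| | lia].
      - intros e He. destruct m as [|m']; [lia|]. unfold Y.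
        rewrite (Xn_step T n b s x e e m' (e (S m'))) by auto.
        rewrite (Xn_step T n b s x e (upd e (S m') v) m' v) by (try apply upd_eq; intros; apply upd_le; auto).
        fold h. set (sv := s (tj T n (S m')) (Xn T n b s x e m')).
        replace ((Xn T n b s x e m' + h * b (tj T n (S m')) (Xn T n b s x e m') + sqrt h * sv * e (S m') -
          (Xn T n b s x e m' + h * b (tj T n (S m')) (Xn T n b s x e m') + sqrt h * sv * v)) * c)
          with (sv * (e (S m') - v)) by (unfold c; field; lra).
        rewrite Rabs_mult. assert (Hsv : Rabs sv <= K) by (apply Hsb; apply tj_range; auto; lia).
        assert (Rabs (e (S m') - v) <= 2).
        { destruct (He (S m') ltac:(lia)) as [E|E]; rewrite E; destruct Hv as [->| ->];
          unfold Rabs; destruct Rcase_abs; lra. }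
        assert (0 <= Rabs (e (S m') - v)) by apply Rabs_pos.
        assert (0 <= Rabs sv) by apply Rabs_pos. nra.
      - intros j Hj HjM e He.
        assert (Ht := tj_range T n (S j) HT Hn ltac:(lia)).
        destruct (diff_rec (Xn T n b s x e j) (Xn T n b s x (upd e m v) j)
           (b (tj T n (S j)) (Xn T n b s x e j)) (b (tj T n (S j)) (Xn T n b s x (upd e m v) j))
           (s (tj T n (S j)) (Xn T n b s x e j)) (s (tj T n (S j)) (Xn T n b s x (upd e m v) j))
           h c K Hc (Hlb _ Ht _ _) (Hls _ Ht _ _)) as [al [be [Hal [Hbe Heq]]]].
        exists al, be. split; [exact Hal|]. split; [exact Hbe|].
        intros w Hw. unfold Y.
        rewrite (Xn_step T n b s x e (upd e (S j) w) j w)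
          by (try apply upd_eq; intros; apply upd_le; auto).
        rewrite (Xn_step T n b s x (upd e m v) (upd (upd e (S j) w) m v) j w)
          by (try apply upd_comm_S; try lia; intros; apply upd_comm_le; auto).
        fold h. apply Heq. }
    assert (Hlift : Erad n (fun e => (Y l e ^ 2) ^ N) = Erad l (fun e => (Y l e ^ 2) ^ N)).
    { apply Erad_lift; [lia|]. intros j e v' Hj. unfold Y. unfold Xn.
      rewrite (Xfrom_ext _ _ _ _ 0 x (upd (upd e j v') m v) (upd e m v) l) by (intros; apply upd_far; lia).
      rewrite (Xfrom_ext _ _ _ _ 0 x (upd e j v') e l) by (intros; apply upd_neq; lia).
      reflexivity. }
    apply Rle_trans with (Erad n (fun e => rpow h (p / 2) * (1 + (Y l e ^ 2) ^ N))).
    + apply Erad_mono. intros e _. unfold Tshift.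
      apply rpow_reduce; auto.
    + rewrite Erad_scal, Erad_plus_const, Hlift. rewrite (Rmult_comm _ (rpow h (p / 2))).
      apply Rmult_le_compat_l. apply rpow_nonneg. apply Rplus_le_compat_l.
      eapply Rle_trans. exact HYl. apply Rmult_le_compat_r. apply pow_le, pow2_ge_0.
      replace (h * (2 * K + Mb r * K ^ 2) * INR N * INR (l - m)) with
        (h * ((2 * K + Mb r * K ^ 2) * INR N) * INR (l - m)) by ring.
      apply exp_bound_T; auto. lia. apply gamma_nonneg; auto.
Qed.


Lemma rem_bound (f fx : R -> R) K Xp Xm X : (X = Xp \/ X = Xm) ->
  (forall y z, Rabs (f y - f z - fx z * (y - z)) <= K * (y - z) ^ 2) ->
  Rabs (f Xp - f Xm - fx X * (Xp - Xm)) <= K * (Xp - Xm) ^ 2.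
Proof.
  intros [->| ->] H.
  - replace (f Xp - f Xm - fx Xp * (Xp - Xm)) with (- (f Xm - f Xp - fx Xp * (Xm - Xp))) by ring.
    rewrite Rabs_Ropp. replace ((Xp - Xm) ^ 2) with ((Xm - Xp) ^ 2) by ring. apply H.
  - apply H.
Qed.

Lemma r1_bd R0 D K sig q : 0 < q -> 0 < sig -> sig <= K -> Rabs R0 <= K * D ^ 2 ->
  Rabs (R0 / (2 * sig)) <= 2 * K ^ 2 * (q * q) * (D / (2 * q) / sig) ^ 2.
Proof.
  intros Hq Hs HK HR.
  replace (2 * K ^ 2 * (q * q) * (D / (2 * q) / sig) ^ 2) with ((K * D ^ 2) * (K / sig) / (2 * sig)) by (field; lra).
  unfold Rdiv. rewrite Rabs_mult, (Rabs_pos_eq (/ (2 * sig))) by (left; apply Rinv_0_lt_compat; lra).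
  apply Rmult_le_compat_r. left; apply Rinv_0_lt_compat; lra.
  assert (1 <= K * / sig) by (apply Rmult_le_reg_r with sig; auto; rewrite Rmult_assoc, Rinv_l; lra).
  assert (0 <= K * D ^ 2) by (eapply Rle_trans; [apply Rabs_pos | exact HR]). nra.
Qed.

Lemma r2_bd R0 D K sig q : 0 < q -> 0 < sig -> sig <= K -> Rabs R0 <= K * D ^ 2 ->
  Rabs (R0 / (2 * q * sig)) <= 2 * K ^ 2 * q * (D / (2 * q) / sig) ^ 2.
Proof.
  intros Hq Hs HK HR.
  replace (2 * K ^ 2 * q * (D / (2 * q) / sig) ^ 2) with ((K * D ^ 2) * (K / sig) / (2 * q * sig)) by (field; lra).
  unfold Rdiv. rewrite Rabs_mult, (Rabs_pos_eq (/ (2 * q * sig))) by (left; apply Rinv_0_lt_compat; nra).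
  apply Rmult_le_compat_r. left; apply Rinv_0_lt_compat; nra.
  assert (1 <= K * / sig) by (apply Rmult_le_reg_r with sig; auto; rewrite Rmult_assoc, Rinv_l; lra).
  assert (0 <= K * D ^ 2) by (eapply Rle_trans; [apply Rabs_pos | exact HR]). nra.
Qed.


Definition C2 (T K : R) (r : nat) : R :=
  1 + exp ((2 + 2 * K + 2 * Mb r * K ^ 2) * INR (2 ^ r) * T) *
   (((K * (sqrt T + 1)) ^ 2) ^ (2 ^ r) +
    T * ((1 + T) * ((1 + T) * (2 * K ^ 2) ^ 2 + 2 * Mb r * (2 * K ^ 2) ^ 2)) ^ (2 ^ r) *
    exp ((2 * K + Mb (S r) * K ^ 2) * INR (2 ^ S r) * T)).

Lemma part_ii T K b bx s sx p r x n k m :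
  0 < T -> Hyps T K b bx s sx -> 0 < p -> p <= 2 * INR (2 ^ r) ->
  (1 <= n)%nat -> (k < m <= n)%nat ->
  Erad n (fun e => rpow (Rabs
          (NablaFrom T n b s bx sx k (Xn T n b s x e k) e (m - k)
           - Dmal T n (S k) (fun e' => Xn T n b s x e' m) e
             / s (tj T n (S k)) (Xn T n b s x e k))) p)
   <= C2 T K r * rpow (step T n) (p / 2).
Proof.
  intros HT HH Hp HpN Hn Hkm.
  destruct HH as [HK [Hlb [Hls [Htb [Hts [Hbx [Hsx [Hsb Hsp]]]]]]]].
  set (h := step T n). assert (Hh : 0 < h) by (apply step_pos; auto).
  assert (HhT : h <= T) by (apply step_le; auto).
  set (q := sqrt h). assert (Hq : 0 < q) by (apply sqrt_lt_R0; auto).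
  assert (Hqq : h = q * q) by (unfold q; rewrite sqrt_sqrt; lra).
  set (N := (2 ^ r)%nat).
  set (X := fun e j => Xn T n b s x e j).
  set (sig := fun e => s (tj T n (S k)) (X e k)).
  assert (Htk : 0 <= tj T n (S k) <= T) by (apply tj_range; auto; lia).
  assert (Hsig : forall e, 0 < sig e) by (intros; apply Hsp; auto).
  assert (HsigK : forall e, sig e <= K) by (intros e; pose proof (Hsb _ (X e k) Htk); unfold sig;
     apply Rle_trans with (Rabs (s (tj T n (S k)) (X e k))); [apply Rle_abs | auto]).
  set (U := fun j e => Dmal T n (S k) (fun e' => X e' j) e / sig e).
  set (W := fun j e => (NablaFrom T n b s bx sx k (X e k) e (j - k) - U j e) / q).
  assert (Hsig_upd : forall e j w, (k < j)%nat -> sig (upd e j w) = sig e).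
  { intros e j w Hj. unfold sig, X, Xn. rewrite (Xfrom_ext _ _ _ _ 0 x (upd e j w) e k) by (intros; apply upd_neq; lia).
    reflexivity. }
  assert (EU : forall j e, U j e = (X (upd e (S k) 1) j - X (upd e (S k) (-1)) j) * (/ (2 * q) * / sig e)).
  { intros. unfold U, Dmal, Rdiv. fold h q. ring. }
  set (Bu := exp ((2 * K + Mb (S r) * K ^ 2) * INR (2 ^ S r) * T)).
  assert (HU : forall j, (S k <= j <= m)%nat -> Erad j (fun e => (U j e ^ 2) ^ (2 ^ S r)) <= Bu).
  { intros j Hj.
    assert (HY := hom_moment U (S k) m K h 1 (S r) Hh ltac:(lra) ltac:(lra)).
    eapply Rle_trans. apply HY; [| | exact Hj].
    - intros e He. right. rewrite EU. unfold X.
      rewrite (Xn_step T n b s x e (upd e (S k) 1) k 1) by (try apply upd_eq; intros; apply upd_le; auto).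
      rewrite (Xn_step T n b s x e (upd e (S k) (-1)) k (-1)) by (try apply upd_eq; intros; apply upd_le; auto).
      fold h q. assert (Hs := Hsig e). unfold sig, X in Hs |- *.
      match goal with |- Rabs ?z = 1 => replace z with 1 by (field; lra) end. apply Rabs_R1.
    - intros j' Hj' Hj'M e He.
      assert (Ht := tj_range T n (S j') HT Hn ltac:(lia)).
      assert (Hc : 0 < / (2 * q) * / sig e).
      { assert (Hs := Hsig e). apply Rmult_lt_0_compat; apply Rinv_0_lt_compat; lra. }
      destruct (diff_rec (X (upd e (S k) 1) j') (X (upd e (S k) (-1)) j')
         (b (tj T n (S j')) (X (upd e (S k) 1) j')) (b (tj T n (S j')) (X (upd e (S k) (-1)) j'))
         (s (tj T n (S j')) (X (upd e (S k) 1) j')) (s (tj T n (S j')) (X (upd e (S k) (-1)) j'))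
         h _ K Hc (Hlb _ Ht _ _) (Hls _ Ht _ _)) as [al [be [Hal [Hbe Heq]]]].
      rewrite <- EU in Hal, Hbe.
      exists al, be. split; [exact Hal|]. split; [exact Hbe|].
      intros w Hw. rewrite !EU. rewrite Hsig_upd by lia. unfold X.
      rewrite (Xn_step T n b s x (upd e (S k) 1) (upd (upd e (S j') w) (S k) 1) j' w)
        by (try apply upd_comm_S; try lia; intros; apply upd_comm_le; auto).
      rewrite (Xn_step T n b s x (upd e (S k) (-1)) (upd (upd e (S j') w) (S k) (-1)) j' w)
        by (try apply upd_comm_S; try lia; intros; apply upd_comm_le; auto).
      fold h. apply Heq.
    - unfold Bu. rewrite pow1, pow1. rewrite Rmult_1_r.
      replace (h * (2 * K + Mb (S r) * K ^ 2) * INR (2 ^ S r) * INR (j - S k)) with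
        (h * ((2 * K + Mb (S r) * K ^ 2) * INR (2 ^ S r)) * INR (j - S k)) by ring.
      apply exp_bound_T; auto. lia. apply gamma_nonneg; auto. }
  assert (HU1 : forall e, U (S k) e = 1).
  { intros e. rewrite EU. unfold X.
    rewrite (Xn_step T n b s x e (upd e (S k) 1) k 1) by (try apply upd_eq; intros; apply upd_le; auto).
    rewrite (Xn_step T n b s x e (upd e (S k) (-1)) k (-1)) by (try apply upd_eq; intros; apply upd_le; auto).
    fold h q. assert (Hs := Hsig e). unfold sig, X in Hs |- *. field. lra. }
  set (c0 := K * (sqrt T + 1)).
  assert (Hc0 : 0 <= c0) by (unfold c0; pose proof (sqrt_pos T); nra).
  assert (HBu : 0 <= Bu) by (left; apply exp_pos).
  assert (HW := inh_moment W U (S k) m K (2 * K ^ 2) h c0 Bu r Hh ltac:(lra)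
     ltac:(assert (0 <= K^2) by apply pow2_ge_0; lra) Hc0 HBu).
  assert (HWm : Erad m (fun e => (W m e ^ 2) ^ N) <=
     exp (h * (2 + 2 * K + 2 * Mb r * K ^ 2) * INR N * INR (m - S k)) *
    ((c0 ^ 2) ^ N + INR (m - S k) * (h * ((1 + h) * ((1 + h) * (2 * K ^ 2) ^ 2 + 2 * Mb r * (2 * K ^ 2) ^ 2)) ^ N * Bu))).
  { apply HW; [| | | lia].
    - intros e He. unfold W. rewrite HU1.
      replace (S k - k)%nat with 1%nat by lia. simpl.
      assert (Htk1 : 0 <= tj T n (k + 1) <= T) by (apply tj_range; auto; lia).
      fold h q.
      set (A := bx (tj T n (k + 1)) (X e k)). set (B := sx (tj T n (k + 1)) (X e k)).
      assert (HA : Rabs A <= K) by (apply Hbx; auto). assert (HB : Rabs B <= K) by (apply Hsx; auto).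
      assert (HE : Rabs (e (k + 1)%nat) <= 1).
      { replace (k + 1)%nat with (S k) by lia. destruct (He (S k) ltac:(lia)) as [E|E]; rewrite E;
        unfold Rabs; destruct Rcase_abs; lra. }
      replace ((1 + h * A * 1 + q * B * 1 * e (k + 1)%nat - 1) / q) with (q * A + B * e (k + 1)%nat)
        by (rewrite Hqq; field; lra).
      assert (Hqs : q <= sqrt T) by (apply sqrt_le_1_alt; lra).
      eapply Rle_trans. apply Rabs_triang. rewrite !Rabs_mult, (Rabs_pos_eq q) by lra.
      unfold c0. assert (0 <= Rabs A) by apply Rabs_pos. assert (0 <= Rabs B) by apply Rabs_pos.
      assert (0 <= Rabs (e (k + 1)%nat)) by apply Rabs_pos. nra.
    - intros j Hj HjM. apply HU. lia.
    - intros j Hj HjM e He.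
      assert (Ht := tj_range T n (S j) HT Hn ltac:(lia)).
      set (t := tj T n (S j)).
      set (Xp := X (upd e (S k) 1) j). set (Xm := X (upd e (S k) (-1)) j). set (X0 := X e j).
      exists (bx t X0), (sx t X0), ((b t Xp - b t Xm - bx t X0 * (Xp - Xm)) / (2 * sig e)),
        ((s t Xp - s t Xm - sx t X0 * (Xp - Xm)) / (2 * q * sig e)).
      assert (HX0 : X0 = Xp \/ X0 = Xm).
      { unfold X0, Xp, Xm, X, Xn. destruct (He (S k) ltac:(lia)) as [E|E]; [left|right];
        apply Xfrom_ext; intros i _; unfold upd; destruct (Nat.eq_dec i (S k)); subst; auto. }
      assert (EUj : U j e = (Xp - Xm) / (2 * q) / sig e) by reflexivity.
      split; [apply Hbx; auto|]. split; [apply Hsx; auto|]. split; [|split].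
      + rewrite EUj, Hqq. apply r1_bd; auto. apply (rem_bound (b t) (bx t)); auto.
      + rewrite EUj. unfold q at 1. fold q. apply r2_bd; auto. apply (rem_bound (s t) (sx t)); auto.
      + intros w Hw. unfold W.
        change (X (upd e (S j) w) k) with (Xn T n b s x (upd e (S j) w) k).
        rewrite (Nab_step T n b s bx sx x k e (upd e (S j) w) j w) by (try lia; try apply upd_eq; intros; apply upd_le; auto).
        unfold U, Dmal. rewrite Hsig_upd by lia. unfold X.
        rewrite (Xn_step T n b s x (upd e (S k) 1) (upd (upd e (S j) w) (S k) 1) j w)
          by (try apply upd_comm_S; try lia; intros; apply upd_comm_le; auto).
        rewrite (Xn_step T n b s x (upd e (S k) (-1)) (upd (upd e (S j) w) (S k) (-1)) j w)
          by (try apply upd_comm_S; try lia; intros; apply upd_comm_le; auto).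
        fold h q. fold t. unfold Xp, Xm, X0, X.
        apply W_alg; auto. }
  assert (Hlift : Erad n (fun e => (W m e ^ 2) ^ N) = Erad m (fun e => (W m e ^ 2) ^ N)).
  { apply Erad_lift; [lia|]. intros j e v Hj. unfold W, U, Dmal. rewrite Hsig_upd by lia.
    unfold X, Xn.
    rewrite (Xfrom_ext _ _ _ _ 0 x (upd e j v) e k) by (intros; apply upd_neq; lia).
    rewrite (Nabla_ext _ _ _ _ _ _ k _ (upd e j v) e (m - k)) by (intros; apply upd_neq; lia).
    rewrite (Xfrom_ext _ _ _ _ 0 x (upd (upd e j v) (S k) 1) (upd e (S k) 1) m) by (intros; apply upd_far; lia).
    rewrite (Xfrom_ext _ _ _ _ 0 x (upd (upd e j v) (S k) (-1)) (upd e (S k) (-1)) m) by (intros; apply upd_far; lia).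
    reflexivity. }
  apply Rle_trans with (Erad n (fun e => rpow h (p / 2) * (1 + (W m e ^ 2) ^ N))).
  { apply Erad_mono. intros e _. apply rpow_reduce; auto. }
  rewrite Erad_scal, Erad_plus_const, Hlift. rewrite (Rmult_comm _ (rpow h (p / 2))).
  apply Rmult_le_compat_l. apply rpow_nonneg. unfold C2. fold c0. fold Bu. fold N.
  apply Rplus_le_compat_l. eapply Rle_trans. exact HWm.
  set (g := (2 + 2 * K + 2 * Mb r * K ^ 2) * INR N).
  assert (Hg : 0 <= g).
  { unfold g. apply Rmult_le_pos; [|apply pos_INR]. pose proof (Mb_ge1 r).
    assert (0 <= K^2) by apply pow2_ge_0. nra. }
  apply Rmult_le_compat.
  - left; apply exp_pos.
  - assert (0 <= (c0 ^ 2) ^ N) by (apply pow_le, pow2_ge_0).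
    assert (0 <= INR (m - S k)) by apply pos_INR.
    assert (0 <= (1 + h) * ((1 + h) * (2 * K ^ 2) ^ 2 + 2 * Mb r * (2 * K ^ 2) ^ 2)).
    { pose proof (Mb_ge1 r). assert (0 <= (2 * K ^ 2) ^ 2) by apply pow2_ge_0. apply Rmult_le_pos; [lra|]. assert (0 <= Mb r * (2 * K ^ 2) ^ 2) by (apply Rmult_le_pos; lra). nra. }
    assert (0 <= h * ((1 + h) * ((1 + h) * (2 * K ^ 2) ^ 2 + 2 * Mb r * (2 * K ^ 2) ^ 2)) ^ N * Bu).
    { apply Rmult_le_pos; auto. apply Rmult_le_pos; [lra|]. apply pow_le; auto. }
    nra.
  - replace (h * (2 + 2 * K + 2 * Mb r * K ^ 2) * INR N * INR (m - S k)) with (h * g * INR (m - S k))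
      by (unfold g; ring).
    apply exp_bound_T; auto; lia.
  - apply Rplus_le_compat_l.
    assert (Hs := step_sum T n (m - S k) HT Hn ltac:(lia)). fold h in Hs.
    set (QT := (1 + T) * ((1 + T) * (2 * K ^ 2) ^ 2 + 2 * Mb r * (2 * K ^ 2) ^ 2)).
    set (Qh := (1 + h) * ((1 + h) * (2 * K ^ 2) ^ 2 + 2 * Mb r * (2 * K ^ 2) ^ 2)).
    assert (HQ : 0 <= Qh <= QT).
    { unfold Qh, QT. pose proof (Mb_ge1 r). assert (0 <= (2 * K ^ 2) ^ 2) by apply pow2_ge_0.
      assert (0 <= Mb r * (2 * K ^ 2) ^ 2) by (apply Rmult_le_pos; lra).
      assert (0 <= (1 + h) * (2 * K ^ 2) ^ 2) by (apply Rmult_le_pos; lra).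
      split. apply Rmult_le_pos; lra.
      assert ((1 + h) * (2 * K ^ 2) ^ 2 <= (1 + T) * (2 * K ^ 2) ^ 2) by (apply Rmult_le_compat_r; lra).
      apply Rmult_le_compat; lra. }
    assert (HQN : Qh ^ N <= QT ^ N) by (apply pow_incr; auto).
    assert (0 <= Qh ^ N) by (apply pow_le; lra).
    replace (INR (m - S k) * (h * Qh ^ N * Bu)) with ((h * INR (m - S k)) * (Qh ^ N * Bu)) by ring.
    replace (T * QT ^ N * Bu) with (T * (QT ^ N * Bu)) by ring.
    apply Rmult_le_compat; auto.
    + apply Rmult_le_pos; [lra | apply pos_INR].
    + apply Rmult_le_pos; auto.
    + apply Rmult_le_compat_r; auto.
Qed.


Lemma exists_r p : exists r : nat, p <= 2 * INR (2 ^ r).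
Proof.
  destruct (archimed p) as [H1 _].
  exists (Z.to_nat (Z.abs (up p))).
  set (r := Z.to_nat (Z.abs (up p))).
  assert (Hr : p <= INR r).
  { unfold r. rewrite INR_IZR_INZ, Z2Nat.id by apply Z.abs_nonneg.
    rewrite abs_IZR. pose proof (Rle_abs (IZR (up p))). lra. }
  assert (Hlt : (r < 2 ^ r)%nat) by (apply Nat.pow_gt_lin_r; lia).
  assert (INR r <= INR (2 ^ r)) by (apply le_INR; lia).
  assert (0 <= INR r) by apply pos_INR. lra.
Qed.

Lemma hyps_of_A T gamma delta b bx bxx s sx sxx : 0 < T ->
  AssumptionA T gamma delta b bx bxx s sx sxx -> exists K, Hyps T K b bx s sx.
Proof.
  intros HT HA.
  destruct HA as [Hg [Hd [Hdb [Hds [_ [_ [_ [_ [_ [_ [_ [[Kbx HKbx] [[Kbxx HKbxx] [[Ks HKs] [[Ksx HKsx] [[Ksxx HKsxx] [_ [_ [_ [_ [_ [_ Hsd]]]]]]]]]]]]]]]]]]]]]].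
  set (K := 1 + Rabs Kbx + Rabs Kbxx + Rabs Ks + Rabs Ksx + Rabs Ksxx).
  assert (Ha := Rabs_pos Kbx). assert (Hb := Rabs_pos Kbxx). assert (Hc := Rabs_pos Ks).
  assert (Hd' := Rabs_pos Ksx). assert (He := Rabs_pos Ksxx).
  assert (B1 : forall t y, 0 <= t <= T -> Rabs (bx t y) <= K).
  { intros t y Ht. pose proof (HKbx t y Ht). pose proof (Rle_abs Kbx). unfold K; lra. }
  assert (B2 : forall t y, 0 <= t <= T -> Rabs (bxx t y) <= K).
  { intros t y Ht. pose proof (HKbxx t y Ht). pose proof (Rle_abs Kbxx). unfold K; lra. }
  assert (B3 : forall t y, 0 <= t <= T -> Rabs (s t y) <= K).
  { intros t y Ht. pose proof (HKs t y Ht). pose proof (Rle_abs Ks). unfold K; lra. }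
  assert (B4 : forall t y, 0 <= t <= T -> Rabs (sx t y) <= K).
  { intros t y Ht. pose proof (HKsx t y Ht). pose proof (Rle_abs Ksx). unfold K; lra. }
  assert (B5 : forall t y, 0 <= t <= T -> Rabs (sxx t y) <= K).
  { intros t y Ht. pose proof (HKsxx t y Ht). pose proof (Rle_abs Ksxx). unfold K; lra. }
  exists K. repeat split.
  - unfold K; lra.
  - intros t Ht. apply lipschitz with (fx := bx t); intros y.
    apply (Hdb t y Ht). apply B1; auto.
  - intros t Ht. apply lipschitz with (fx := sx t); intros y.
    apply (Hds t y Ht). apply B4; auto.
  - intros t Ht. apply taylor1 with (fxx := bxx t); intros y.
    apply (Hdb t y Ht). apply (Hdb t y Ht). apply B2; auto.
  - intros t Ht. apply taylor1 with (fxx := sxx t); intros y.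
    apply (Hds t y Ht). apply (Hds t y Ht). apply B5; auto.
  - intros; apply B1; auto.
  - intros; apply B4; auto.
  - intros; apply B3; auto.
  - intros t y Ht. pose proof (Hsd t y Ht). lra.
Qed.

Theorem mainTheorem11 (T gamma delta p : R) (b bx bxx s sx sxx : R -> R -> R) :
  0 < T ->
  AssumptionA T gamma delta b bx bxx s sx sxx ->
  2 <= p ->
  exists C : R,
    forall (n : nat) (x : R), (1 <= n)%nat ->
    (* (i) *)
    (forall l m : nat, (1 <= l <= n)%nat -> (1 <= m <= n)%nat ->
       forall v : R, (v = 1 \/ v = -1) ->
       Erad n (fun e => rpow (Rabs (Xn T n b s x e l
                                    - Tshift m v (fun e' => Xn T n b s x e' l) e)) p)
         <= C * rpow (step T n) (p / 2)) /\
    (* (ii) *)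
    (forall k m : nat, (k < m <= n)%nat ->
       Erad n (fun e => rpow (Rabs
          (NablaFrom T n b s bx sx k (Xn T n b s x e k) e (m - k)
           - Dmal T n (S k) (fun e' => Xn T n b s x e' m) e
             / s (tj T n (S k)) (Xn T n b s x e k))) p)
         <= C * rpow (step T n) (p / 2)) /\
    (* (iii) *)
    (forall k m : nat, (1 <= k <= m)%nat -> (m <= n)%nat ->
       Erad n (fun e => rpow (Rabs (Dmal T n k (fun e' => Xn T n b s x e' m) e)) p)
         <= C).
Proof.
  intros HT HA Hp.
  destruct (hyps_of_A T gamma delta b bx bxx s sx sxx HT HA) as [K HH].
  destruct (exists_r p) as [r Hr].
  assert (HK : 0 < K) by (destruct HH; auto).
  set (C1 := 1 + exp ((2 * K + Mb r * K ^ 2) * INR (2 ^ r) * T) * ((2 * K) ^ 2) ^ (2 ^ r)).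
  set (C3 := 1 + exp ((2 * K + Mb r * K ^ 2) * INR (2 ^ r) * T) * (K ^ 2) ^ (2 ^ r)).
  assert (H1 : 0 <= C1).
  { unfold C1. assert (0 <= ((2 * K) ^ 2) ^ (2 ^ r)) by (apply pow_le, pow2_ge_0).
    assert (0 < exp ((2 * K + Mb r * K ^ 2) * INR (2 ^ r) * T)) by apply exp_pos. nra. }
  assert (H3 : 0 <= C3).
  { unfold C3. assert (0 <= (K ^ 2) ^ (2 ^ r)) by (apply pow_le, pow2_ge_0).
    assert (0 < exp ((2 * K + Mb r * K ^ 2) * INR (2 ^ r) * T)) by apply exp_pos. nra. }
  assert (H2 : 0 <= C2 T K r).
  { unfold C2. pose proof (Mb_ge1 r).
    assert (0 <= ((K * (sqrt T + 1)) ^ 2) ^ 2 ^ r) by (apply pow_le, pow2_ge_0).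
    assert (0 <= (2 * K ^ 2) ^ 2) by apply pow2_ge_0.
    assert (0 <= Mb r * (2 * K ^ 2) ^ 2) by (apply Rmult_le_pos; lra).
    assert (0 <= (1 + T) * (2 * K ^ 2) ^ 2) by (apply Rmult_le_pos; lra).
    assert (0 <= ((1 + T) * ((1 + T) * (2 * K ^ 2) ^ 2 + 2 * Mb r * (2 * K ^ 2) ^ 2)) ^ 2 ^ r)
      by (apply pow_le; apply Rmult_le_pos; lra).
    assert (0 < exp ((2 * K + Mb (S r) * K ^ 2) * INR (2 ^ S r) * T)) by apply exp_pos.
    assert (0 < exp ((2 + 2 * K + 2 * Mb r * K ^ 2) * INR (2 ^ r) * T)) by apply exp_pos.
    assert (0 <= T * ((1 + T) * ((1 + T) * (2 * K ^ 2) ^ 2 + 2 * Mb r * (2 * K ^ 2) ^ 2)) ^ 2 ^ r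
       * exp ((2 * K + Mb (S r) * K ^ 2) * INR (2 ^ S r) * T)).
    { apply Rmult_le_pos; [apply Rmult_le_pos|]; lra. }
    nra. }
  exists (C1 + C2 T K r + C3).
  intros n x Hn.
  assert (Hrp : 0 <= rpow (step T n) (p / 2)) by apply rpow_nonneg.
  split; [|split].
  - intros l m Hl Hm v Hv.
    eapply Rle_trans. apply (part_i T K b bx s sx p r x n l m v); auto; lra.
    fold C1. apply Rmult_le_compat_r; auto. lra.
  - intros k m Hkm.
    eapply Rle_trans. apply (part_ii T K b bx s sx p r x n k m); auto; lra.
    apply Rmult_le_compat_r; auto. lra.
  - intros k m Hkm Hmn.
    eapply Rle_trans. apply (part_iii T K b bx s sx p r x n k m); auto; lra.
    fold C3. lra.
Qed.
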